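(* Let $\mathbf{F}=(f_{ij})$ be an $n\times n$ nonnegative matrix, $\vec z=(z_1,\dots,z_n)^{\mathrm T}$ a nonnegative column vector and $\vec y=(y_1,\dots,y_n)$ a nonnegative row vector. Define $T^{\mathrm{in}}_i=\sum_{j} f_{ij}+z_i$ and $T^{\mathrm{out}}_j=\sum_{i} f_{ij}+y_j$, assume all are positive, and assume steady state: $T^{\mathrm{in}}_\ell=T^{\mathrm{out}}_\ell$ for all $\ell$. Let $\mathbf G=(g_{ij})$ with $g_{ij}=f_{ij}/T^{\mathrm{out}}_j$ and $\mathbf G'=(g'_{ij})$ with $g'_{ij}=f_{ij}/T^{\mathrm{in}}_i$. Then $\sum_{i=1}^n(\mathbf G\vec z)_i=\sum_{i=1}^n(\vec y\mathbf G')_i$.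
   Context: $f_{ij}$ is the flow from node $j$ to node $i$, $z_i$ the boundary input to node $i$, $y_j$ the boundary output from node $j$. *)

(* Defs.v *)
From mathcomp Require Import all_boot all_order all_algebra.
Set Implicit Arguments. Unset Strict Implicit. Unset Printing Implicit Defensive.
Import Order.TTheory GRing.Theory Num.Theory.
Local Open Scope ring_scope.

(* f_{ij} = F i j is the flow from node j to node i. *)
Definition Tin (R : ringType) (n : nat) (F : 'M[R]_n) (z : 'cV[R]_n) (i : 'I_n) : R :=
  \sum_(j < n) F i j + z i 0.
Definition Tout (R : ringType) (n : nat) (F : 'M[R]_n) (y : 'rV[R]_n) (j : 'I_n) : R :=
  \sum_(i < n) F i j + y 0 j.
Definition Gout (R : fieldType) (n : nat) (F : 'M[R]_n) (y : 'rV[R]_n) : 'M[R]_n :=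
  \matrix_(i, j) (F i j / Tout F y j).
Definition Gin (R : fieldType) (n : nat) (F : 'M[R]_n) (z : 'cV[R]_n) : 'M[R]_n :=
  \matrix_(i, j) (F i j / Tin F z i).

(* Main.v *)
Require Import Defs.
From mathcomp Require Import all_boot all_order all_algebra.
From mathcomp Require Import ring lra.
Import Order.TTheory GRing.Theory Num.Theory.
Local Open Scope ring_scope.

Theorem proposition1 (R : realFieldType) (n : nat)
  (F : 'M[R]_n) (z : 'cV[R]_n) (y : 'rV[R]_n)
  (hF : forall i j, 0 <= F i j)
  (hz : forall i, 0 <= z i 0)
  (hy : forall j, 0 <= y 0 j)
  (hTin : forall i, 0 < Tin F z i)
  (hTout : forall j, 0 < Tout F y j)
  (hsteady : forall l, Tin F z l = Tout F y l) :
  \sum_(i < n) (Gout F y *m z) i 0 = \sum_(i < n) (y *m Gin F z) 0 i.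
Proof.
have sumzy : \sum_(j < n) z j 0 = \sum_(j < n) y 0 j.
  have : \sum_(l < n) Tin F z l = \sum_(l < n) Tout F y l.
    by apply: eq_bigr => l _; exact: hsteady.
  rewrite /Tin /Tout !big_split /= [X in X + _ = _]exchange_big /=.
  by move/addrI.
have L : \sum_(i < n) (Gout F y *m z) i 0 =
   \sum_(j < n) (z j 0 - y 0 j * z j 0 / Tout F y j).
  transitivity (\sum_(i < n) \sum_(j < n) F i j / Tout F y j * z j 0).
    by apply: eq_bigr => i _; rewrite mxE; apply: eq_bigr => j _; rewrite mxE.
  rewrite exchange_big /=; apply: eq_bigr => j _.
  rewrite -!mulr_suml.
  have : \sum_(i < n) F i j = Tout F y j - y 0 j by rewrite /Tout addrK.
  move=> ->; have := hTout j; set T := Tout F y j => hT.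
  field; by rewrite gt_eqF.
have Rr : \sum_(i < n) (y *m Gin F z) 0 i =
   \sum_(j < n) (y 0 j - y 0 j * z j 0 / Tout F y j).
  transitivity (\sum_(i < n) \sum_(j < n) y 0 j * (F j i / Tin F z j)).
    by apply: eq_bigr => i _; rewrite mxE; apply: eq_bigr => j _; rewrite mxE.
  rewrite exchange_big /=; apply: eq_bigr => j _.
  have e : \sum_(i < n) y 0 j * (F j i / Tin F z j) = y 0 j * (\sum_(i < n) F j i) / Tin F z j.
    by rewrite mulr_sumr mulr_suml; apply: eq_bigr => i _; rewrite mulrA.
  rewrite e.
  have : \sum_(i < n) F j i = Tin F z j - z j 0 by rewrite /Tin addrK.
  move=> ->; rewrite -hsteady; have := hTin j; set T := Tin F z j => hT.
  field; by rewrite gt_eqF.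
by rewrite L Rr !sumrB sumzy.
Qed.
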